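(* Consider the GTFG system with $\lambda=0$ (setting below) and the invariant set $\mathcal M_2$, the closure in $\mathcal P^6$ of the set of points with $x_1x_2\ne0$ satisfying $F=0$, $F_1=0$, with partial integrals $\mathsf M$ and $L$ (defined below). Then the outer type of the points of $\mathcal M_2$ is as follows: if $\mathsf M=\varepsilon_1^2$ or $L=0$, the points are degenerate; if $L\neq0$, then all points with $\mathsf M>\varepsilon_1^2$ have outer type ''center'' and all points with $\mathsf M<\varepsilon_1^2$ have outer type ''saddle''. (Precisely, $C_\Phi=-4r^4(\mathsf M-\varepsilon_1^2)L^2$.)
   Context: Phase variables $\mathbf M,\boldsymbol\alpha,\boldsymbol\beta\in\mathbb R^3$ on $e(3,2)^*\cong\mathbb R^9$ with Lie–Poisson dynamics: a function $\Phi$ generates $\mathrm{sgrad}\,\Phi$: $\dot{\mathbf M}=\mathbf M\times\partial\Phi/\partial\mathbf M+\boldsymbol\alpha\times\partial\Phi/\partial\boldsymbol\alpha+\boldsymbol\beta\times\partial\Phi/\partial\boldsymbol\beta$, $\dot{\boldsymbol\alpha}=\boldsymbol\alpha\times\partial\Phi/\partial\mathbf M$, $\dot{\boldsymbol\beta}=\boldsymbol\beta\times\partial\Phi/\partial\mathbf M$. Constants $a>b>0$, $p^2=a^2+b^2$, $r^2=a^2-b^2$; phase space $\mathcal P^6=\{\boldsymbol\alpha^2=a^2,\boldsymbol\beta^2=b^2,\boldsymbol\alpha\cdot\boldsymbol\beta=0\}$. Real parameters $\varepsilon_0\ge0,\varepsilon_1,\lambda$. GTFG Hamiltonian $H=\tfrac14(M_1^2+M_2^2)+\tfrac12(M_3-\lambda)^2-\varepsilon_1[(\alpha_2M_3-\alpha_3M_2)+(\beta_3M_1-\beta_1M_3)]-\varepsilon_0(\alpha_1+\beta_2)$,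 with further first integrals $K,G$: $K=\big[\tfrac14(M_1^2-M_2^2)+\varepsilon_0(\alpha_1-\beta_2)+\varepsilon_1\big((\boldsymbol\alpha\times\mathbf M)\cdot\mathbf e_1-(\boldsymbol\beta\times\mathbf M)\cdot\mathbf e_2-\varepsilon_1(\boldsymbol\alpha^2-\boldsymbol\beta^2)\big)\big]^2+\big[\tfrac12M_1M_2+\varepsilon_0(\alpha_2+\beta_1)+\varepsilon_1\big((\boldsymbol\alpha\times\mathbf M)\cdot\mathbf e_2+(\boldsymbol\beta\times\mathbf M)\cdot\mathbf e_1-2\varepsilon_1\boldsymbol\alpha\cdot\boldsymbol\beta\big)\big]^2$ (for $\lambda=0$), $G=\tfrac14[(\mathbf M\cdot\boldsymbol\alpha)^2+(\mathbf M\cdot\boldsymbol\beta)^2]+\tfrac12M_3(\boldsymbol\alpha\times\boldsymbol\beta)\cdot\mathbf M+\varepsilon_0[\boldsymbol\beta^2\alpha_1+\boldsymbol\alpha^2\beta_2-(\boldsymbol\alpha\cdot\boldsymbol\beta)(\alpha_2+\beta_1)]-\varepsilon_1[\boldsymbol\beta^2(\boldsymbol\alpha\times\mathbf M)\cdot\mathbf e_1+\boldsymbol\alpha^2(\boldsymbol\beta\times\mathbf M)\cdot\mathbf e_2-(\boldsymbol\alpha\cdot\boldsymbol\beta)((\boldsymbol\alpha\times\mathbf M)\cdot\mathbf e_2+(\boldsymbol\beta\times\mathbf M)\cdot\mathbf e_1)]$ (for $\lambda=0$), where $\mathbf e_1=(1,0,0)$, $\mathbf e_2=(0,1,0)$.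 Complex variables: $x_{1,2}=(\alpha_1-\beta_2)\pm\mathrm i(\alpha_2+\beta_1)$, $y_{1,2}=(\alpha_1+\beta_2)\pm\mathrm i(\alpha_2-\beta_1)$, $z_{1,2}=\alpha_3\pm\mathrm i\beta_3$, $w_{1,2}=\tfrac12(M_1\pm\mathrm iM_2)$, $w_3=M_3-\lambda$; $\sqrt{x_1x_2}=|x_1|$. Functions: $\xi_1=w_1^2+\varepsilon_0x_1-\mathrm i\varepsilon_1(x_1w_3-2z_1w_1)-\varepsilon_1^2r^2$, $\xi_2=w_2^2+\varepsilon_0x_2+\mathrm i\varepsilon_1(x_2w_3-2z_2w_2)-\varepsilon_1^2r^2$; $F=\sqrt{x_1x_2}\,w_3-\frac{x_2z_1w_1+x_1z_2w_2}{\sqrt{x_1x_2}}+\mathrm i\varepsilon_1r^2\frac{x_1-x_2}{\sqrt{x_1x_2}}$; $F_1=\frac{x_2}{x_1}\xi_1-\frac{x_1}{x_2}\xi_2$; $\mathsf M=\frac1{2r^2}\big(\frac{x_2}{x_1}\xi_1+\frac{x_1}{x_2}\xi_2\big)+\varepsilon_1^2$; $L=\frac1{\sqrt{x_1x_2}}[(w_1+\mathrm i\varepsilon_1z_1)(w_2-\mathrm i\varepsilon_1z_2)+(x_1x_2+z_1z_2)(\mathsf M-\varepsilon_1^2)]+\varepsilon_1^2\sqrt{x_1x_2}$. Outer type: $\mathcal M_2$ lies in $\{\Phi=0,d\Phi=0\}$ for the first integral $\Phi=(p^2H-2G+\varepsilon_1^2r^4)^2-r^4K$ (equivalently one may use $\Phi_2=\tfrac14F_1^2-F^2(\mathsf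 M-\varepsilon_1^2)$, which gives the same linearization on $\mathcal M_2$ up to positive factor conventions used in the paper). Each $x\in\mathcal M_2$ is a zero of $\mathrm{sgrad}\,\Phi$; let $A_\Phi$ be its linearization at $x$ on $\mathbb R^9$; its characteristic polynomial is $-\mu^7(\mu^2-C_\Phi)$ with $C_\Phi=\tfrac12\operatorname{tr}(A_\Phi^2)$. The outer type of $x$ is ''center'' if $C_\Phi<0$, ''saddle'' if $C_\Phi>0$, and $x$ is degenerate if $C_\Phi=0$. The paper computes $C_\Phi$ with $\Phi=\Phi_2$. *)

(* Defs.v *)
From Stdlib Require Import Reals Lra.
From Coquelicot Require Import Coquelicot.
Open Scope R_scope.

(** Points of e(3,2)^* = R^9, coordinates indexed by nat:
    0,1,2 = M1,M2,M3 ; 3,4,5 = alpha1,alpha2,alpha3 ; 6,7,8 = beta1,beta2,beta3.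
    (Coordinates >= 9 are irrelevant and never used.) *)
Definition pt := nat -> R.

Definition upd (y : pt) (i : nat) (t : R) : pt :=
  fun k => if Nat.eqb k i then y k + t else y k.

Definition pderiv (f : pt -> R) (i : nat) (y : pt) : R :=
  Derive (fun t => f (upd y i t)) 0.

(** Lie--Poisson Hamiltonian vector field sgrad Phi on e(3,2)^*:
    dM = M x Phi_M + alpha x Phi_alpha + beta x Phi_beta,
    dalpha = alpha x Phi_M, dbeta = beta x Phi_M. *)
Definition cross1 (u1 u2 u3 v1 v2 v3 : R) := u2 * v3 - u3 * v2.
Definition cross2 (u1 u2 u3 v1 v2 v3 : R) := u3 * v1 - u1 * v3.
Definition cross3 (u1 u2 u3 v1 v2 v3 : R) := u1 * v2 - u2 * v1.

Definition sgrad (Phi : pt -> R) (y : pt) : pt :=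
  let g := fun i => pderiv Phi i y in
  let crs := fun (c : R -> R -> R -> R -> R -> R -> R) =>
    c (y 0%nat) (y 1%nat) (y 2%nat) (g 0%nat) (g 1%nat) (g 2%nat)
    + c (y 3%nat) (y 4%nat) (y 5%nat) (g 3%nat) (g 4%nat) (g 5%nat)
    + c (y 6%nat) (y 7%nat) (y 8%nat) (g 6%nat) (g 7%nat) (g 8%nat) in
  fun k =>
    match k with
    | 0%nat => crs cross1
    | 1%nat => crs cross2
    | 2%nat => crs cross3
    | 3%nat => cross1 (y 3%nat) (y 4%nat) (y 5%nat) (g 0%nat) (g 1%nat) (g 2%nat)
    | 4%nat => cross2 (y 3%nat) (y 4%nat) (y 5%nat) (g 0%nat) (g 1%nat) (g 2%nat)
    | 5%nat => cross3 (y 3%nat) (y 4%nat) (y 5%nat) (g 0%nat) (g 1%nat) (g 2%nat)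
    | 6%nat => cross1 (y 6%nat) (y 7%nat) (y 8%nat) (g 0%nat) (g 1%nat) (g 2%nat)
    | 7%nat => cross2 (y 6%nat) (y 7%nat) (y 8%nat) (g 0%nat) (g 1%nat) (g 2%nat)
    | 8%nat => cross3 (y 6%nat) (y 7%nat) (y 8%nat) (g 0%nat) (g 1%nat) (g 2%nat)
    | _ => 0
    end.

Definition linA (Phi : pt -> R) (x : pt) (i j : nat) : R :=
  pderiv (fun y => sgrad Phi y i) j x.

Definition C_Phi (Phi : pt -> R) (x : pt) : R :=
  / 2 * sum_f_R0 (fun i => sum_f_R0 (fun j => linA Phi x i j * linA Phi x j i) 8) 8.

Definition outer_center (Phi : pt -> R) (x : pt) : Prop := C_Phi Phi x < 0.
Definition outer_saddle (Phi : pt -> R) (x : pt) : Prop := C_Phi Phi x > 0.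
Definition outer_degenerate (Phi : pt -> R) (x : pt) : Prop := C_Phi Phi x = 0.

Definition in_P6 (a b : R) (y : pt) : Prop :=
  y 3%nat ^ 2 + y 4%nat ^ 2 + y 5%nat ^ 2 = a ^ 2 /\
  y 6%nat ^ 2 + y 7%nat ^ 2 + y 8%nat ^ 2 = b ^ 2 /\
  y 3%nat * y 6%nat + y 4%nat * y 7%nat + y 5%nat * y 8%nat = 0.

(** Complex variables (lambda = 0, so w3 = M3) *)
Definition x1 (y : pt) : C := (y 3%nat - y 7%nat, y 4%nat + y 6%nat).
Definition x2 (y : pt) : C := (y 3%nat - y 7%nat, - (y 4%nat + y 6%nat)).
Definition z1 (y : pt) : C := (y 5%nat, y 8%nat).
Definition z2 (y : pt) : C := (y 5%nat, - y 8%nat).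
Definition w1 (y : pt) : C := (y 0%nat / 2, y 1%nat / 2).
Definition w2 (y : pt) : C := (y 0%nat / 2, - (y 1%nat / 2)).
Definition w3 (y : pt) : C := RtoC (y 2%nat).

Section GTFG.
Variables (a b e0 e1 : R).
Definition r2 : R := a ^ 2 - b ^ 2.

(** sqrt(x1 x2) = |x1| *)
Definition sq12 (y : pt) : C := RtoC (Cmod (x1 y)).

Definition xi1 (y : pt) : C :=
  (w1 y * w1 y + RtoC e0 * x1 y
   - Ci * RtoC e1 * (x1 y * w3 y - RtoC 2 * z1 y * w1 y) - RtoC (e1 ^ 2 * r2))%C.
Definition xi2 (y : pt) : C :=
  (w2 y * w2 y + RtoC e0 * x2 y
   + Ci * RtoC e1 * (x2 y * w3 y - RtoC 2 * z2 y * w2 y) - RtoC (e1 ^ 2 * r2))%C.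

Definition Fc (y : pt) : C :=
  (sq12 y * w3 y - (x2 y * z1 y * w1 y + x1 y * z2 y * w2 y) / sq12 y
   + Ci * RtoC e1 * RtoC r2 * (x1 y - x2 y) / sq12 y)%C.
Definition F1c (y : pt) : C :=
  (x2 y / x1 y * xi1 y - x1 y / x2 y * xi2 y)%C.
(** partial integral M (complex expression; it is real-valued) *)
Definition Mc (y : pt) : C :=
  (RtoC (/ (2 * r2)) * (x2 y / x1 y * xi1 y + x1 y / x2 y * xi2 y) + RtoC (e1 ^ 2))%C.
(** partial integral L (complex expression; it is real-valued) *)
Definition Lc (y : pt) : C :=
  (/ sq12 y * ((w1 y + Ci * RtoC e1 * z1 y) * (w2 y - Ci * RtoC e1 * z2 y)
               + (x1 y * x2 y + z1 y * z2 y) * (Mc y - RtoC (e1 ^ 2)))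
   + RtoC (e1 ^ 2) * sq12 y)%C.

Definition Mr (y : pt) : R := Re (Mc y).
Definition Lr (y : pt) : R := Re (Lc y).

Definition Phi2 (y : pt) : R :=
  Re (RtoC (/ 4) * F1c y * F1c y - Fc y * Fc y * (Mc y - RtoC (e1 ^ 2)))%C.

End GTFG.

(* Main.v *)
Require Import Defs.
From Stdlib Require Import Reals.
From Coquelicot Require Import Coquelicot.
Open Scope R_scope.
From Stdlib Require Import Lra FunctionalExtensionality.

Lemma dcst c t : derivable_pt_lim (fun _ => c) t 0.
Proof. exact (derivable_pt_lim_const c t). Qed.
Lemma did t : derivable_pt_lim (fun s => s) t 1.
Proof. exact (derivable_pt_lim_id t). Qed.
Lemma dplus f g t a b : derivable_pt_lim f t a -> derivable_pt_lim g t b ->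
  derivable_pt_lim (fun s => f s + g s) t (a + b).
Proof. intros H1 H2. exact (derivable_pt_lim_plus f g t a b H1 H2). Qed.
Lemma dmult f g t a b : derivable_pt_lim f t a -> derivable_pt_lim g t b ->
  derivable_pt_lim (fun s => f s * g s) t (a * g t + f t * b).
Proof. intros H1 H2. exact (derivable_pt_lim_mult f g t a b H1 H2). Qed.
Lemma dopp f t a : derivable_pt_lim f t a -> derivable_pt_lim (fun s => - f s) t (- a).
Proof. intros H1. exact (derivable_pt_lim_opp f t a H1). Qed.
Lemma dinv f t a : derivable_pt_lim f t a -> f t <> 0 ->
  derivable_pt_lim (fun s => / f s) t (- a / (f t ^ 2)).
Proof. intros H1 H2.
  assert (H := derivable_pt_lim_div (fun _ => 1) f t 0 a (derivable_pt_lim_const 1 t) H1 H2).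
  unfold div_fct in H.
  replace (- a / f t ^ 2) with ((0 * f t - a * 1) / (f t)²) by (unfold Rsqr; field; auto).
  intros e He. destruct (H e He) as [d Hd]. exists d. intros h Hh Hd'.
  specialize (Hd h Hh Hd'). unfold Rdiv in Hd. rewrite !Rmult_1_l in Hd. exact Hd. Qed.
Lemma deq f t l l' : derivable_pt_lim f t l -> l = l' -> derivable_pt_lim f t l'.
Proof. intros H ->; exact H. Qed.

Inductive pe := PV (i:nat) | PC (c:R) | PA (p q:pe) | PM (p q:pe) | PO (p:pe).
Fixpoint ev (p:pe) (y:pt) : R :=
  match p with PV i => y i | PC c => c | PA p q => ev p y + ev q y
  | PM p q => ev p y * ev q y | PO p => - ev p y end.
Fixpoint dv (k:nat) (p:pe) : pe :=
  match p with PV i => if Nat.eqb i k then PC 1 else PC 0 | PC _ => PC 0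
  | PA p q => PA (dv k p) (dv k q) | PM p q => PA (PM (dv k p) q) (PM p (dv k q))
  | PO p => PO (dv k p) end.

Lemma ev_der p y k t :
  derivable_pt_lim (fun s => ev p (upd y k s)) t (ev (dv k p) (upd y k t)).
Proof.
  induction p; simpl.
  - unfold upd. destruct (Nat.eqb i k).
    + apply (deq _ _ (0+1)). apply dplus. apply dcst. apply did. simpl; ring.
    + apply dcst.
  - apply dcst.
  - apply dplus; auto.
  - apply dmult; auto.
  - apply dopp; auto.
Qed.

Lemma upd0 y k : forall i, upd y k 0 i = y i.
Proof. intro i; unfold upd; destruct (Nat.eqb i k); [apply Rplus_0_r | reflexivity]. Qed.
Lemma ev_upd0 p y k : ev p (upd y k 0) = ev p y.
Proof. induction p; simpl; rewrite ?upd0; congruence. Qed.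

Definition cpe := (pe * pe)%type.
Definition cadd (u v : cpe) : cpe := (PA (fst u) (fst v), PA (snd u) (snd v)).
Definition csub (u v : cpe) : cpe := (PA (fst u) (PO (fst v)), PA (snd u) (PO (snd v))).
Definition cmul (u v : cpe) : cpe :=
  (PA (PM (fst u) (fst v)) (PO (PM (snd u) (snd v))), PA (PM (fst u) (snd v)) (PM (snd u) (fst v))).
Definition ccj (u : cpe) : cpe := (fst u, PO (snd u)).
Definition cre (p : pe) : cpe := (p, PC 0).
Definition cI : cpe := (PC 0, PC 1).

Definition pX := PA (PV 3) (PO (PV 7)).
Definition pY := PA (PV 4) (PV 6).
Definition px1 : cpe := (pX, pY).
Definition pz1 : cpe := (PV 5, PV 8).
Definition pw1 : cpe := (PM (PC (/2)) (PV 0), PM (PC (/2)) (PV 1)).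
Definition pD := PA (PM pX pX) (PM pY pY).
Definition pxi1 (e0 e1 r : R) : cpe :=
  csub (csub (cadd (cmul pw1 pw1) (cmul (cre (PC e0)) px1))
     (cmul (cmul cI (cre (PC e1))) (csub (cmul px1 (cre (PV 2))) (cmul (cre (PC 2)) (cmul pz1 pw1)))))
     (cre (PC (e1 ^ 2 * r))).
Definition pqt e0 e1 r := cmul (cmul (ccj px1) (ccj px1)) (pxi1 e0 e1 r).
Definition pP e0 e1 r := snd (pqt e0 e1 r).
Definition pQ e0 e1 r := fst (pqt e0 e1 r).
Definition pN e1 r := PA (PA (PM pD (PV 2)) (PO (PM (PC 2) (fst (cmul (ccj px1) (cmul pz1 pw1))))))
   (PO (PM (PC 2) (PM (PC (e1 * r)) pY))).


Lemma Fc_eq a b e1 y : ev pD y <> 0 ->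
  Fc a b e1 y = RtoC (Cmod (x1 y) * y 2%nat - (2 * ev (fst (cmul (ccj px1) (cmul pz1 pw1))) y
      + 2 * (e1 * r2 a b * ev pY y)) / Cmod (x1 y)).
Proof.
  intros HD.
  assert (Hs : Cmod (x1 y) <> 0).
  { unfold Cmod, x1; simpl fst; simpl snd. intro H.
    assert (E: ev pD y = (y 3%nat - y 7%nat)^2 + (y 4%nat + y 6%nat)^2) by (simpl; ring).
    rewrite <- E in H. apply sqrt_eq_0 in H. auto.
    rewrite E. apply Rplus_le_le_0_compat; apply pow2_ge_0. }
  unfold Fc, sq12, x2, z1, z2, w1, w2, w3.
  set (s := Cmod (x1 y)) in *. unfold x1 in *.
  apply injective_projections; simpl; field; auto.
Qed.

Lemma Re_split u f z : Re (u - RtoC f * RtoC f * z)%C = Re u - f * f * Re z.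
Proof. destruct u, z; unfold Re, RtoC; simpl; ring. Qed.

Lemma sq_lem s d u K : s * s = d -> s <> 0 -> (s * u - K / s) * (s * u - K / s) = (d * u - K) ^ 2 / d.
Proof. intros <- Hs. field. auto. Qed.

Ltac dnz HD := match goal with |- ?e <> 0 =>
   first [ replace e with (ev pD _) by (simpl; ring); exact HD | assumption | lra ] end.

Lemma Cmod_nz y : ev pD y <> 0 -> Cmod (x1 y) <> 0.
Proof.
  intros HD. unfold Cmod, x1; simpl fst; simpl snd. intro H.
    assert (E: ev pD y = (y 3%nat - y 7%nat)^2 + (y 4%nat + y 6%nat)^2) by (simpl; ring).
    rewrite <- E in H. apply sqrt_eq_0 in H. auto.
    rewrite E. apply Rplus_le_le_0_compat; apply pow2_ge_0.
Qed.
Lemma Cmod_sq y : Cmod (x1 y) * Cmod (x1 y) = ev pD y.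
Proof. unfold Cmod, x1; simpl fst; simpl snd. rewrite sqrt_sqrt. simpl; ring.
    apply Rplus_le_le_0_compat; apply pow2_ge_0. Qed.

Lemma Phi2_eq a b e0 e1 y : ev pD y <> 0 -> r2 a b <> 0 ->
  Phi2 a b e0 e1 y = - ((ev (pP e0 e1 (r2 a b)) y / ev pD y)^2 +
     (ev (pN e1 (r2 a b)) y / ev pD y)^2 * (ev (pQ e0 e1 (r2 a b)) y / r2 a b)).
Proof.
  intros HD Hr.
  unfold Phi2. rewrite (Fc_eq a b e1 y HD). rewrite Re_split.
  rewrite (sq_lem _ _ _ _ (Cmod_sq y) (Cmod_nz y HD)).
  replace (ev pD y * y 2%nat - _) with (ev (pN e1 (r2 a b)) y) by (simpl; ring).
  unfold F1c, Mc, xi1, xi2, x1, x2, z1, z2, w1, w2, w3.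
  set (r := r2 a b) in *.
  simpl. field; repeat split; dnz HD.
Qed.


Lemma dminus f g t a b : derivable_pt_lim f t a -> derivable_pt_lim g t b ->
  derivable_pt_lim (fun s => f s - g s) t (a - b).
Proof. intros H1 H2. exact (derivable_pt_lim_minus f g t a b H1 H2). Qed.
Lemma dext f g t l : (forall s, f s = g s) -> derivable_pt_lim f t l -> derivable_pt_lim g t l.
Proof. intros H H1. replace g with f; auto. apply functional_extensionality; auto. Qed.

Definition phir (p n q d r : R) := - ((p / d)^2 + (n / d)^2 * (q / r)).
Definition dphir (p n q d p1 n1 q1 d1 r : R) :=
  - (2 * (p / d) * ((p1 * d - p * d1) / (d * d)) +
     (2 * (n / d) * ((n1 * d - n * d1) / (d * d)) * (q / r) + (n / d) * (n / d) * (q1 / r))).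

Ltac dcomb := repeat first [ apply dminus | apply dplus | apply dmult | apply dopp
   | apply dinv | eassumption | apply dcst ].

Lemma d_phir p n q d p1 n1 q1 d1 r t :
  derivable_pt_lim p t p1 -> derivable_pt_lim n t n1 -> derivable_pt_lim q t q1 ->
  derivable_pt_lim d t d1 -> d t <> 0 -> r <> 0 ->
  derivable_pt_lim (fun s => phir (p s) (n s) (q s) (d s) r) t
    (dphir (p t) (n t) (q t) (d t) p1 n1 q1 d1 r).
Proof.
  intros Hp Hn Hq Hd Hd0 Hr.
  apply (dext (fun s => - (p s * / d s * (p s * / d s) + n s * / d s * (n s * / d s) * (q s * / r)))).
  { intro s. unfold phir, Rdiv. ring. }
  eapply deq. dcomb. all: try exact Hd0.
  unfold dphir. field. split; auto.
Qed.

Lemma loc_nz f l : derivable_pt_lim f 0 l -> f 0 <> 0 -> locally 0 (fun t => f t <> 0).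
Proof.
  intros Hd H0.
  assert (Hc : continuity_pt f 0).
  { apply derivable_continuous_pt. exists l. exact Hd. }
  assert (He : 0 < Rabs (f 0)) by (apply Rabs_pos_lt; auto).
  destruct (Hc _ He) as [del [Hdel Hdd]].
  exists (mkposreal _ Hdel). intros z Hz Hz0. simpl in Hz.
  unfold ball in Hz; simpl in Hz; unfold AbsRing_ball, abs, minus, plus, opp in Hz; simpl in Hz.
  destruct (Req_dec z 0) as [Ez|Ez].
  - subst z. auto.
  - assert (Hzz : Rabs (f z - f 0) < Rabs (f 0)).
    { apply (Hdd z). split. split. exact I. auto. simpl. unfold R_dist.
      replace (z - 0) with (z + - 0) by ring. exact Hz. }
    rewrite Hz0 in Hzz. replace (0 - f 0) with (- f 0) in Hzz by ring.
    rewrite Rabs_Ropp in Hzz. lra.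
Qed.

Lemma pderiv_Phi2 a b e0 e1 k y : ev pD y <> 0 -> r2 a b <> 0 ->
  pderiv (Phi2 a b e0 e1) k y =
  dphir (ev (pP e0 e1 (r2 a b)) y) (ev (pN e1 (r2 a b)) y) (ev (pQ e0 e1 (r2 a b)) y) (ev pD y)
        (ev (dv k (pP e0 e1 (r2 a b))) y) (ev (dv k (pN e1 (r2 a b))) y)
        (ev (dv k (pQ e0 e1 (r2 a b))) y) (ev (dv k pD) y) (r2 a b).
Proof.
  intros HD Hr. unfold pderiv. apply is_derive_unique.
  apply is_derive_ext_loc with
   (f := fun t => phir (ev (pP e0 e1 (r2 a b)) (upd y k t)) (ev (pN e1 (r2 a b)) (upd y k t))
                       (ev (pQ e0 e1 (r2 a b)) (upd y k t)) (ev pD (upd y k t)) (r2 a b)).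
  - assert (HL := loc_nz (fun t => ev pD (upd y k t)) _ (ev_der pD y k 0)).
    cbv beta in HL. rewrite ev_upd0 in HL. specialize (HL HD).
    eapply filter_imp; [| exact HL]. intros t Ht. simpl in Ht.
    rewrite Phi2_eq; auto.
  - apply is_derive_Reals.
    rewrite <- (ev_upd0 (pP e0 e1 (r2 a b)) y k), <- (ev_upd0 (pN e1 (r2 a b)) y k),
      <- (ev_upd0 (pQ e0 e1 (r2 a b)) y k), <- (ev_upd0 pD y k),
      <- (ev_upd0 (dv k (pP e0 e1 (r2 a b))) y k), <- (ev_upd0 (dv k (pN e1 (r2 a b))) y k),
      <- (ev_upd0 (dv k (pQ e0 e1 (r2 a b))) y k), <- (ev_upd0 (dv k pD) y k).
    apply d_phir; try apply ev_der; auto.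
    rewrite ev_upd0; auto.
Qed.

Definition Sg (y : pt) (g : nat -> R) : pt :=
  let crs := fun (c : R -> R -> R -> R -> R -> R -> R) =>
    c (y 0%nat) (y 1%nat) (y 2%nat) (g 0%nat) (g 1%nat) (g 2%nat)
    + c (y 3%nat) (y 4%nat) (y 5%nat) (g 3%nat) (g 4%nat) (g 5%nat)
    + c (y 6%nat) (y 7%nat) (y 8%nat) (g 6%nat) (g 7%nat) (g 8%nat) in
  fun k =>
    match k with
    | 0%nat => crs cross1
    | 1%nat => crs cross2
    | 2%nat => crs cross3
    | 3%nat => cross1 (y 3%nat) (y 4%nat) (y 5%nat) (g 0%nat) (g 1%nat) (g 2%nat)
    | 4%nat => cross2 (y 3%nat) (y 4%nat) (y 5%nat) (g 0%nat) (g 1%nat) (g 2%nat)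
    | 5%nat => cross3 (y 3%nat) (y 4%nat) (y 5%nat) (g 0%nat) (g 1%nat) (g 2%nat)
    | 6%nat => cross1 (y 6%nat) (y 7%nat) (y 8%nat) (g 0%nat) (g 1%nat) (g 2%nat)
    | 7%nat => cross2 (y 6%nat) (y 7%nat) (y 8%nat) (g 0%nat) (g 1%nat) (g 2%nat)
    | 8%nat => cross3 (y 6%nat) (y 7%nat) (y 8%nat) (g 0%nat) (g 1%nat) (g 2%nat)
    | _ => 0
    end.

Lemma sgrad_Sg Phi y i : sgrad Phi y i = Sg y (fun k => pderiv Phi k y) i.
Proof. reflexivity. Qed.

Lemma Sg_ext y g g' i : (forall k, g k = g' k) -> Sg y g i = Sg y g' i.
Proof. intros H. unfold Sg. rewrite !H. reflexivity. Qed.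

Lemma dupd x j a : derivable_pt_lim (fun t => upd x j t a) 0 (if Nat.eqb a j then 1 else 0).
Proof.
  unfold upd. destruct (Nat.eqb a j).
  - apply (deq _ _ (0+1)). apply dplus. apply dcst. apply did. ring.
  - apply dcst.
Qed.

Lemma dSg x j i gg h : (forall k, derivable_pt_lim (gg k) 0 (h k)) -> (forall k, gg k 0 = 0) ->
  derivable_pt_lim (fun t => Sg (upd x j t) (fun k => gg k t) i) 0 (Sg x h i).
Proof.
  intros Hd H0.
  destruct i as [|[|[|[|[|[|[|[|[|i]]]]]]]]]; unfold Sg, cross1, cross2, cross3;
  (eapply deq; [ repeat first [ apply dminus | apply dplus | apply dmult | apply dupd | apply Hd | apply dcst ] | ]);
  rewrite ?H0, ?upd0; ring.
Qed.

Lemma d_dphir p n q d pk nk qk dk p1 n1 q1 d1 pk1 nk1 qk1 dk1 r :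
  derivable_pt_lim p 0 p1 -> derivable_pt_lim n 0 n1 -> derivable_pt_lim q 0 q1 ->
  derivable_pt_lim d 0 d1 -> derivable_pt_lim pk 0 pk1 -> derivable_pt_lim nk 0 nk1 ->
  derivable_pt_lim qk 0 qk1 -> derivable_pt_lim dk 0 dk1 ->
  p 0 = 0 -> n 0 = 0 -> d 0 <> 0 -> r <> 0 ->
  derivable_pt_lim (fun t => dphir (p t) (n t) (q t) (d t) (pk t) (nk t) (qk t) (dk t) r) 0
    (- (2 * (p1 / d 0) * (pk 0 / d 0) + 2 * (n1 / d 0) * (nk 0 / d 0) * (q 0 / r))).
Proof.
  intros Hp Hn Hq Hd Hpk Hnk Hqk Hdk Hp0 Hn0 Hd0 Hr.
  unfold dphir, Rdiv.
  eapply deq. dcomb.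
  all: try exact Hd0; try exact Hr; try (apply Rmult_integral_contrapositive_currified; exact Hd0).
  cbv beta.
  rewrite Hp0, Hn0. field. split; auto.
Qed.

Definition Hm (x : pt) (P N Q : pe) (r : R) (j k : nat) : R :=
  - (2 * (ev (dv j P) x / ev pD x) * (ev (dv k P) x / ev pD x)
     + 2 * (ev (dv j N) x / ev pD x) * (ev (dv k N) x / ev pD x) * (ev Q x / r)).

Lemma linA_eq a b e0 e1 x i j : ev pD x <> 0 -> r2 a b <> 0 ->
  ev (pP e0 e1 (r2 a b)) x = 0 -> ev (pN e1 (r2 a b)) x = 0 ->
  linA (Phi2 a b e0 e1) x i j =
  Sg x (fun k => Hm x (pP e0 e1 (r2 a b)) (pN e1 (r2 a b)) (pQ e0 e1 (r2 a b)) (r2 a b) j k) i.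
Proof.
  intros HD Hr HP HN.
  set (P := pP e0 e1 (r2 a b)) in *. set (N := pN e1 (r2 a b)) in *.
  set (Q := pQ e0 e1 (r2 a b)) in *. set (r := r2 a b) in *.
  unfold linA, pderiv at 1. apply is_derive_unique.
  apply is_derive_ext_loc with
   (f := fun t => Sg (upd x j t) (fun k => dphir (ev P (upd x j t)) (ev N (upd x j t))
          (ev Q (upd x j t)) (ev pD (upd x j t)) (ev (dv k P) (upd x j t))
          (ev (dv k N) (upd x j t)) (ev (dv k Q) (upd x j t)) (ev (dv k pD) (upd x j t)) r) i).
  - assert (HL := loc_nz (fun t => ev pD (upd x j t)) _ (ev_der pD x j 0)).
    cbv beta in HL. rewrite ev_upd0 in HL. specialize (HL HD).
    eapply filter_imp; [| exact HL]. intros t Ht. simpl in Ht.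
    rewrite sgrad_Sg. apply Sg_ext. intro k. unfold P, N, Q, r. rewrite pderiv_Phi2; auto.
  - apply is_derive_Reals.
    apply dSg.
    + intro k. eapply deq.
      * eapply d_dphir; try apply ev_der; cbv beta; rewrite ?ev_upd0; auto.
      * cbv beta. rewrite !ev_upd0. unfold Hm. reflexivity.
    + intro k. rewrite !ev_upd0, HP, HN. unfold dphir, Rdiv. ring.
Qed.

Definition brk (x : pt) (u v : nat -> R) : R :=
  u 0%nat * Sg x v 0%nat + u 1%nat * Sg x v 1%nat + u 2%nat * Sg x v 2%nat
  + u 3%nat * Sg x v 3%nat + u 4%nat * Sg x v 4%nat + u 5%nat * Sg x v 5%nat
  + u 6%nat * Sg x v 6%nat + u 7%nat * Sg x v 7%nat + u 8%nat * Sg x v 8%nat.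

Lemma trace_id x u v al be :
  / 2 * sum_f_R0 (fun i => sum_f_R0 (fun j =>
      Sg x (fun k => al * u j * u k + be * v j * v k) i *
      Sg x (fun k => al * u i * u k + be * v i * v k) j) 8) 8
  = - (al * be) * (brk x u v) ^ 2.
Proof.
  simpl sum_f_R0. unfold brk, Sg, cross1, cross2, cross3. cbv beta zeta. field.
Qed.

Lemma C_eq a b e0 e1 x : ev pD x <> 0 -> r2 a b <> 0 ->
  ev (pP e0 e1 (r2 a b)) x = 0 -> ev (pN e1 (r2 a b)) x = 0 ->
  C_Phi (Phi2 a b e0 e1) x =
  - ((-2 / (ev pD x * ev pD x)) * (-2 * (ev (pQ e0 e1 (r2 a b)) x / r2 a b) / (ev pD x * ev pD x)))
  * (brk x (fun k => ev (dv k (pP e0 e1 (r2 a b))) x) (fun k => ev (dv k (pN e1 (r2 a b))) x)) ^ 2.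
Proof.
  intros HD Hr HP HN.
  rewrite <- trace_id. unfold C_Phi. f_equal.
  apply sum_eq. intros i _. apply sum_eq. intros j _.
  rewrite !linA_eq; auto. f_equal; apply Sg_ext; intro k; unfold Hm; field; auto.
Qed.


Definition pwz (e1 : R) : cpe := cadd pw1 (cmul (cmul cI (cre (PC e1))) pz1).
Definition pW e1 := fst (cmul (pwz e1) (ccj (pwz e1))).
Definition pZ := PA (fst (cmul px1 (ccj px1))) (fst (cmul pz1 (ccj pz1))).
Definition pLp e0 e1 r :=
  PA (PA (PM (PM (PC r) pD) (pW e1)) (PM pZ (pQ e0 e1 r))) (PM (PC (e1 ^ 2 * r)) (PM pD pD)).

Lemma Mr_eq a b e0 e1 y : ev pD y <> 0 -> r2 a b <> 0 ->
  Mr a b e0 e1 y = ev (pQ e0 e1 (r2 a b)) y / (r2 a b * ev pD y) + e1 ^ 2.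
Proof.
  intros HD Hr. unfold Mr, Mc, xi1, xi2, x1, x2, z1, z2, w1, w2, w3.
  set (r := r2 a b) in *. simpl. field; repeat split; dnz HD.
Qed.

Lemma F1c_im a b e0 e1 y : ev pD y <> 0 ->
  Im (F1c a b e0 e1 y) = 2 * ev (pP e0 e1 (r2 a b)) y / ev pD y.
Proof.
  intros HD. unfold F1c, xi1, xi2, x1, x2, z1, z2, w1, w2, w3.
  set (r := r2 a b) in *. simpl. field; repeat split; dnz HD.
Qed.

Lemma Lr_eq a b e0 e1 y : ev pD y <> 0 -> r2 a b <> 0 ->
  Lr a b e0 e1 y = (ev (pW e1) y + ev pZ y * (ev (pQ e0 e1 (r2 a b)) y / (r2 a b * ev pD y)))
      / Cmod (x1 y) + e1 ^ 2 * Cmod (x1 y).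
Proof.
  intros HD Hr. assert (Hs := Cmod_nz y HD).
  unfold Lr, Lc, Mc, sq12, xi1, xi2, x2, z1, z2, w1, w2, w3.
  set (s := Cmod (x1 y)) in *. unfold x1 in *.
  set (r := r2 a b) in *. simpl. field; repeat split; try dnz HD.
Qed.

Lemma sq2_lem s d A c : s * s = d -> s <> 0 -> (A / s + c * s) ^ 2 = (A + c * d) ^ 2 / d.
Proof. intros <- Hs. field. auto. Qed.

Lemma brk_id e0 e1 x r :
  r = (x 3%nat ^ 2 + x 4%nat ^ 2 + x 5%nat ^ 2) - (x 6%nat ^ 2 + x 7%nat ^ 2 + x 8%nat ^ 2) ->
  brk x (fun k => ev (dv k (pP e0 e1 r)) x) (fun k => ev (dv k (pN e1 r)) x) - ev (pLp e0 e1 r) x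
  = ((1)*(x 6%nat)*(x 8%nat)^2*(e1) + (1)*(x 5%nat)^2*(x 6%nat)*(e1) + (1)*(x 4%nat)*(x 8%nat)^2*(e1) + (1)*(x 4%nat)*(x 5%nat)^2*(e1) + (-1/2)*(x 1%nat)*(x 7%nat)*(x 8%nat) + (1/2)*(x 1%nat)*(x 5%nat)*(x 6%nat) + (1/2)*(x 1%nat)*(x 4%nat)*(x 5%nat) + (1/2)*(x 1%nat)*(x 3%nat)*(x 8%nat) + (-1/2)*(x 0%nat)*(x 6%nat)*(x 8%nat) + (-1/2)*(x 0%nat)*(x 5%nat)*(x 7%nat) + (-1/2)*(x 0%nat)*(x 4%nat)*(x 8%nat) + (1/2)*(x 0%nat)*(x 3%nat)*(x 5%nat)) * ev (pN e1 r) x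
    + ((2)*(x 1%nat)*(x 6%nat)^2*(x 8%nat)*(e1) + (2)*(x 1%nat)*(x 5%nat)*(x 6%nat)*(x 7%nat)*(e1) + (4)*(x 1%nat)*(x 4%nat)*(x 6%nat)*(x 8%nat)*(e1) + (2)*(x 1%nat)*(x 4%nat)*(x 5%nat)*(x 7%nat)*(e1) + (2)*(x 1%nat)*(x 4%nat)^2*(x 8%nat)*(e1) + (-2)*(x 1%nat)*(x 3%nat)*(x 5%nat)*(x 6%nat)*(e1) + (-2)*(x 1%nat)*(x 3%nat)*(x 4%nat)*(x 5%nat)*(e1) + (-2)*(x 0%nat)*(x 6%nat)*(x 7%nat)*(x 8%nat)*(e1) + (2)*(x 0%nat)*(x 5%nat)*(x 6%nat)^2*(e1) + (-2)*(x 0%nat)*(x 4%nat)*(x 7%nat)*(x 8%nat)*(e1) + (4)*(x 0%nat)*(x 4%nat)*(x 5%nat)*(x 6%nat)*(e1) + (2)*(x 0%nat)*(x 4%nat)^2*(x 5%nat)*(e1) + (2)*(x 0%nat)*(x 3%nat)*(x 6%nat)*(x 8%nat)*(e1) + (2)*(x 0%nat)*(x 3%nat)*(x 4%nat)*(x 8%nat)*(e1)) * (x 3%nat * x 6%nat + x 4%nat * x 7%nat + x 5%nat * x 8%nat).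
Proof.
  intros ->. unfold brk, Sg, cross1, cross2, cross3. cbv beta zeta. simpl. field.
Qed.


Lemma main_eq : forall (a b e0 e1 : R),
    0 < b -> b < a -> 0 <= e0 ->
    forall x : pt,
      in_P6 a b x ->
      x1 x <> 0%C ->
      Fc a b e1 x = 0%C ->
      F1c a b e0 e1 x = 0%C ->
      C_Phi (Phi2 a b e0 e1) x
        = - 4 * (r2 a b) ^ 2 * (Mr a b e0 e1 x - e1 ^ 2) * (Lr a b e0 e1 x) ^ 2.
Proof.
  intros a b e0 e1 Hb Hab He0 x [Ha [Hb2 Hab0]] Hx1 HF HF1.
  assert (Hr0 : r2 a b > 0).
  { unfold r2. replace (a^2 - b^2) with ((a-b)*(a+b)) by ring. apply Rmult_lt_0_compat; lra. }
  assert (Hr : r2 a b <> 0) by lra.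
  assert (HD : ev pD x <> 0).
  { intro H. apply Hx1. unfold x1.
    assert (E : (x 3%nat - x 7%nat) ^ 2 + (x 4%nat + x 6%nat) ^ 2 = 0) by (rewrite <- H; simpl; ring).
    pose proof (pow2_ge_0 (x 3%nat - x 7%nat)). pose proof (pow2_ge_0 (x 4%nat + x 6%nat)).
    assert (E1 : x 3%nat - x 7%nat = 0) by (apply Rsqr_0_uniq; unfold Rsqr; lra).
    assert (E2 : x 4%nat + x 6%nat = 0) by (apply Rsqr_0_uniq; unfold Rsqr; lra).
    rewrite E1, E2. reflexivity. }
  assert (Hs := Cmod_nz x HD). assert (Hss := Cmod_sq x).
  assert (HN : ev (pN e1 (r2 a b)) x = 0).
  { rewrite (Fc_eq a b e1 x HD) in HF.
    apply (f_equal fst) in HF. unfold RtoC in HF. cbn [fst] in HF.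
    set (s := Cmod (x1 x)) in *.
    replace (ev (pN e1 (r2 a b)) x) with (s * (s * x 2%nat - (2 * ev (fst (cmul (ccj px1) (cmul pz1 pw1))) x
      + 2 * (e1 * r2 a b * ev pY x)) / s)).
    rewrite HF; ring.
    replace (ev (pN e1 (r2 a b)) x) with (ev pD x * x 2%nat - (2 * ev (fst (cmul (ccj px1) (cmul pz1 pw1))) x
      + 2 * (e1 * r2 a b * ev pY x))) by (simpl; ring).
    rewrite <- Hss. field. auto. }
  assert (HP : ev (pP e0 e1 (r2 a b)) x = 0).
  { assert (H := F1c_im a b e0 e1 x HD). rewrite HF1 in H.
    assert (H0 : Im 0%C = 0) by reflexivity. rewrite H0 in H.
    assert (E : ev (pP e0 e1 (r2 a b)) x = (2 * ev (pP e0 e1 (r2 a b)) x / ev pD x) * ev pD x / 2)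
      by (field; auto).
    rewrite E, <- H. field. }
  assert (Hbr : brk x (fun k => ev (dv k (pP e0 e1 (r2 a b))) x) (fun k => ev (dv k (pN e1 (r2 a b))) x)
                = ev (pLp e0 e1 (r2 a b)) x).
  { match goal with |- ?L = ?R => assert (E : L - R = 0); [| lra] end.
    rewrite brk_id. rewrite HN, Hab0. ring.
    unfold r2. rewrite <- Ha, <- Hb2. ring. }
  rewrite C_eq; auto. rewrite Hbr.
  rewrite Mr_eq; auto.
  rewrite (Lr_eq a b e0 e1 x HD Hr). rewrite (sq2_lem _ _ _ _ Hss Hs).
  set (r := r2 a b) in *. set (d := ev pD x) in *.
  assert (EL : ev (pLp e0 e1 r) x = r * d * ev (pW e1) x + ev pZ x * ev (pQ e0 e1 r) x + e1 ^ 2 * r * (d * d))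
    by (unfold pLp; cbn [ev]; fold d; ring).
  rewrite EL. field. auto.
Qed.

Theorem theorem5 :
  forall (a b e0 e1 : R),
    0 < b -> b < a -> 0 <= e0 ->
    forall x : pt,
      in_P6 a b x ->
      x1 x <> 0%C ->
      Fc a b e1 x = 0%C ->
      F1c a b e0 e1 x = 0%C ->
      C_Phi (Phi2 a b e0 e1) x
        = - 4 * (r2 a b) ^ 2 * (Mr a b e0 e1 x - e1 ^ 2) * (Lr a b e0 e1 x) ^ 2
      /\ ((Mr a b e0 e1 x = e1 ^ 2 \/ Lr a b e0 e1 x = 0) ->
            outer_degenerate (Phi2 a b e0 e1) x)
      /\ (Lr a b e0 e1 x <> 0 -> Mr a b e0 e1 x > e1 ^ 2 ->
            outer_center (Phi2 a b e0 e1) x)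
      /\ (Lr a b e0 e1 x <> 0 -> Mr a b e0 e1 x < e1 ^ 2 ->
            outer_saddle (Phi2 a b e0 e1) x).
Proof.
  intros a b e0 e1 Hb Hab He0 x H6 Hx1 HF HF1.
  assert (HC := main_eq a b e0 e1 Hb Hab He0 x H6 Hx1 HF HF1).
  assert (Hr0 : r2 a b > 0).
  { unfold r2. replace (a^2 - b^2) with ((a-b)*(a+b)) by ring. apply Rmult_lt_0_compat; lra. }
  assert (Hr2 : 0 < r2 a b ^ 2) by (apply pow_lt; lra).
  set (L := Lr a b e0 e1 x) in *. set (M := Mr a b e0 e1 x) in *.
  split; [exact HC|]. split; [|split].
  - unfold outer_degenerate. rewrite HC. intros [H|H]; rewrite H; ring.
  - unfold outer_center. rewrite HC. intros HL HM.
    assert (HL2 : 0 < L ^ 2) by (replace (L ^ 2) with (L²) by (unfold Rsqr; ring); apply Rsqr_pos_lt; auto).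
    assert (0 < r2 a b ^ 2 * (M - e1 ^ 2) * L ^ 2).
    { apply Rmult_lt_0_compat; [apply Rmult_lt_0_compat|]; lra. }
    lra.
  - unfold outer_saddle. rewrite HC. intros HL HM.
    assert (HL2 : 0 < L ^ 2) by (replace (L ^ 2) with (L²) by (unfold Rsqr; ring); apply Rsqr_pos_lt; auto).
    assert (0 < r2 a b ^ 2 * (e1 ^ 2 - M) * L ^ 2).
    { apply Rmult_lt_0_compat; [apply Rmult_lt_0_compat|]; lra. }
    lra.
Qed.
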